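(* Let $i \geq 1$ be an integer and for $k \in \{1, 2, \dots, 3^i\}$ let $P^k_{C_i} = \left(\frac{k-1}{3^i}, \frac{k}{3^i}\right)$. If $m, n, s \in \{1, \dots, 3^i\}$ satisfy $s = \frac{1}{2}(m+n)$, then $P^s_{C_i} \subset M_{P^m_{C_i} \cup P^n_{C_i}}$.
   Context: For a set $A \subset \mathbb{R}$, the midpoint set of $A$ is $M_A := \left\{\frac{x+y}{2} : x, y \in A,\ x \neq y\right\}$. *)

(* Defs.v *)
From Stdlib Require Import Reals.
Open Scope R_scope.

Definition midpoint_set (A : R -> Prop) : R -> Prop :=
  fun z => exists x y, A x /\ A y /\ x <> y /\ z = (x + y) / 2.

Definition P_C (i k : nat) : R -> Prop :=
  fun x => (INR k - 1) / 3 ^ i < x /\ x < INR k / 3 ^ i.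

(* Main.v *)
Require Import Defs.
From Stdlib Require Import Reals Lra.
Open Scope R_scope.

Theorem lemma2p4 (i m n s : nat) :
  (1 <= i)%nat ->
  (1 <= m <= 3 ^ i)%nat -> (1 <= n <= 3 ^ i)%nat -> (1 <= s <= 3 ^ i)%nat ->
  INR s = (INR m + INR n) / 2 ->
  forall x : R, P_C i s x ->
    midpoint_set (fun y => P_C i m y \/ P_C i n y) x.
Proof.
  intros _ _ _ _ Hs x [H1 H2].
  assert (Hp : 0 < 3 ^ i) by (apply pow_lt; lra).
  set (h := / 3 ^ i).
  assert (hp : 0 < h) by (apply Rinv_0_lt_compat; lra).
  unfold P_C, Rdiv in *. fold h in H1, H2 |- *.
  destruct (Nat.eq_dec m n) as [E|E].
  - subst n.
    assert (Es : INR s = INR m) by lra.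
    set (d1 := x - (INR s - 1) * h). set (d2 := INR s * h - x).
    set (u := Rmin d1 d2).
    assert (u1 : u <= d1) by apply Rmin_l.
    assert (u2 : u <= d2) by apply Rmin_r.
    assert (u0 : 0 < u) by (apply Rmin_glb_lt; unfold d1, d2; lra).
    exists (x - u / 2), (x + u / 2).
    unfold d1, d2 in *. rewrite Es in *.
    split; [left; split; lra|]. split; [left; split; lra|]. split; lra.
  - exists (x + (INR m - INR s) * h), (x + (INR n - INR s) * h).
    split; [left; split; nra|]. split; [right; split; nra|]. split.
    + intro C. apply E. apply INR_eq.
      assert ((INR m - INR n) * h = 0) by lra.
      apply Rmult_integral in H. lra.
    + nra.
Qed.
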